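(* Let $\mathcal{I}=\{p(\mathbf{x})(1-\sum_{i=1}^n x_i):p\in\mathbb{R}[\mathbf{x}]\}$, equip $\mathbb{R}[\mathbf{x}]/\mathcal{I}$ with the norm $\|f\|=\sup_{\mathbf{x}\in\Delta_{n-1}}|f(\mathbf{x})|$, where $\Delta_{n-1}=\{\mathbf{x}\in\mathbb{R}^n_+:x_1+\dots+x_n=1\}$, and let $L:\mathbb{R}[\mathbf{x}]/\mathcal{I}\to\mathbb{R}$ be a linear operator with $L(\mathbf{x}^\alpha)\ge 0$ for all $\alpha\in\mathbb{N}^n$ and $L(1)\le 1$. Then $L$ is continuous with respect to $\|\cdot\|$.
   Context: $\mathbb{R}[\mathbf{x}]=\mathbb{R}[x_1,\dots,x_n]$; $\mathbf{x}^\alpha=x_1^{\alpha_1}\cdots x_n^{\alpha_n}$. *)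

(* Defs.v *)
From HB Require Import structures.
From mathcomp Require Import all_boot all_order all_algebra.
From mathcomp Require Import classical_sets reals.
From mathcomp Require Import mpoly.
Set Implicit Arguments. Unset Strict Implicit. Unset Printing Implicit Defensive.
Import Order.TTheory GRing.Theory Num.Theory.
Local Open Scope ring_scope.
Local Open Scope classical_set_scope.

Definition simplex (R : realType) (n : nat) : set ('I_n -> R) :=
  [set x | (forall i, 0 <= x i) /\ \sum_(i < n) x i = 1].

Definition simplex_gen (R : realType) (n : nat) : {mpoly R[n]} :=
  1 - \sum_(i < n) 'X_i.

(* Sup norm on the simplex: ||f|| = sup_{x in Delta} |f(x)|.
   It is well defined on R[x]/I since elements of I vanish on Delta. *)
Definition simplex_norm (R : realType) (n : nat) (f : {mpoly R[n]}) : R :=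
  sup [set `|f.@[x]| | x in @simplex R n].

(* Main.v *)
Set Warnings "-notation-overridden,-ambiguous-paths,-notation-incompatible-prefix".
Require Import Defs.
From HB Require Import structures.
From mathcomp Require Import all_boot all_order all_algebra.
From mathcomp Require Import classical_sets reals.
From mathcomp Require Import mpoly.
From mathcomp Require Import ring lra.
Import Order.TTheory GRing.Theory Num.Theory.
Set Implicit Arguments. Unset Strict Implicit.
Local Open Scope ring_scope.

Lemma ffact_le_exp (N d : nat) : (N ^_ d <= N ^ d)%N.
Proof.
elim: d => [|d IH] //; rewrite ffactnSr expnSr.
by apply: leq_mul => //; exact: leq_subr.
Qed.

Lemma ffact_ratio (R : realType) (N d : nat) : (0 < N)%N ->
  1 - (N ^_ d)%:R / (N ^ d)%:R <= (d * d)%:R / N%:R :> R.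
Proof.
move=> N0.
have cpos : 0 < N%:R :> R by rewrite ltr0n.
have key : forall d, N%:R * ((N ^ d)%:R - (N ^_ d)%:R) <= (d * d)%:R * (N ^ d)%:R :> R.
  elim=> [|k IH]; first by rewrite ffactn0 expn0 subrr mulr0 mul0r.
  rewrite ffactnSr expnSr !natrM.
  have Fle : (N ^_ k)%:R <= (N ^ k)%:R :> R by rewrite ler_nat ffact_le_exp.
  have F0 : 0 <= (N ^_ k)%:R :> R by rewrite ler0n.
  have m0 : 0 <= (N - k)%:R :> R by rewrite ler0n.
  have mge : N%:R - k%:R <= (N - k)%:R :> R.
    case: (leqP k N) => hk; first by rewrite natrB.
    have -> : (N - k)%N = 0%N by apply/eqP; rewrite subn_eq0 ltnW.
    by rewrite subr_le0 ler_nat ltnW.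
  rewrite -[k.+1]addn1 natrD in IH *.
  have h1 : 0 <= N%:R * ((N ^_ k)%:R * ((N - k)%:R - (N%:R - k%:R))) :> R.
    by apply: mulr_ge0; [exact: ltW | apply: mulr_ge0 => //; rewrite subr_ge0].
  rewrite natrM in IH.
  have D0 : 0 <= k%:R :> R by rewrite ler0n.
  have P0 : 0 <= (N ^ k)%:R :> R by rewrite ler0n.
  have h2 : N%:R * (N%:R * ((N ^ k)%:R - (N ^_ k)%:R)) <= N%:R * (k%:R * k%:R * (N ^ k)%:R) :> R.
    by rewrite ler_pM2l.
  have h3 : 0 <= N%:R * k%:R * ((N ^ k)%:R - (N ^_ k)%:R) :> R.
    by apply: mulr_ge0; [apply: mulr_ge0 => //; exact: ltW | rewrite subr_ge0].
  have h4 : 0 <= N%:R * (N ^ k)%:R * (k%:R + 1) :> R.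
    by apply: mulr_ge0; [apply: mulr_ge0 => //; exact: ltW | lra].
  nra.
have P0 : 0 < (N ^ d)%:R :> R by rewrite ltr0n expn_gt0 N0.
rewrite -subr_le0.
have -> : 1 - (N ^_ d)%:R / (N ^ d)%:R - (d * d)%:R / N%:R =
   (N%:R * ((N ^ d)%:R - (N ^_ d)%:R) - (d * d)%:R * (N ^ d)%:R) / (N%:R * (N ^ d)%:R) :> R.
  by field; apply/andP; split; rewrite lt0r_neq0.
apply: mulr_le0_ge0; first by rewrite subr_le0.
by rewrite invr_ge0 mulr_ge0 // ltW.
Qed.

Section Aux.
Variables (R : realType) (n : nat) (L : {mpoly R[n]} -> R).
Hypothesis L_lin : forall (a : R) (p q : {mpoly R[n]}), L (a *: p + q) = a * L p + L q.
Hypothesis L_I : forall p : {mpoly R[n]}, L (p * @simplex_gen R n) = 0.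
Hypothesis L_mon : forall m : 'X_{1..n}, 0 <= L 'X_[m].

Lemma L0 : L 0 = 0.
Proof.
have := L_lin 1 0 0; rewrite scaler0 addr0 mul1r => h.
by apply/eqP; rewrite -(subrr (L 0)) {2}h addrK.
Qed.

Lemma LD p q : L (p + q) = L p + L q.
Proof. by have := L_lin 1 p q; rewrite scale1r mul1r. Qed.

Lemma LZ a p : L (a *: p) = a * L p.
Proof. by have := L_lin a p 0; rewrite !addr0 L0 addr0. Qed.

Lemma LB p q : L (p - q) = L p - L q.
Proof. by rewrite -scaleN1r LD LZ mulN1r. Qed.

Lemma L_sum (I : Type) (r : seq I) (P : pred I) (F : I -> {mpoly R[n]}) :
  L (\sum_(i <- r | P i) F i) = \sum_(i <- r | P i) L (F i).
Proof. exact: (big_morph L LD L0). Qed.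

Definition SX : {mpoly R[n]} := \sum_(i < n) 'X_i.

Lemma LS q : L (q * SX) = L q.
Proof.
have := L_I q; rewrite /simplex_gen mulrBr mulr1 LB => /eqP.
by rewrite subr_eq0 => /eqP <-.
Qed.

Lemma LSk q k : L (q * SX ^+ k) = L q.
Proof. by elim: k => [|k IH]; rewrite ?expr0 ?mulr1 // exprSr mulrA LS. Qed.

Definition Xs d (t : 'I_d -> 'I_n) : {mpoly R[n]} := \prod_(j < d) 'X_(t j).

Lemma Xs_mon d (t : 'I_d -> 'I_n) : exists m, Xs t = 'X_[m].
Proof.
exists (\sum_(j < d) mnm1 (t j))%MM.
by rewrite /Xs (big_morph (fun m => 'X_[m]) (@mpolyXD _ _) (@mpolyX0 _ _)).
Qed.

Lemma LXs_ge0 d (t : 'I_d -> 'I_n) : 0 <= L (Xs t).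
Proof. by have [m ->] := Xs_mon t. Qed.


Definition cnt N (s : {ffun 'I_N -> 'I_n}) : 'I_n -> R :=
  fun i => (\sum_(k < N) ((s k == i)%:R : R)) / N%:R.

Definition psi N (p : {mpoly R[n]}) : R :=
  \sum_(s : {ffun 'I_N -> 'I_n}) L (Xs s) * p.@[cnt s].

Lemma sum_m N : \sum_(s : {ffun 'I_N -> 'I_n}) L (Xs s) = L 1.
Proof.
rewrite -[in RHS](LSk 1 N) mul1r -L_sum; congr L.
have -> : SX ^+ N = \prod_(k < N) SX by rewrite prodr_const card_ord.
by rewrite /SX bigA_distr_bigA.
Qed.

Lemma cnt_simplex N (s : {ffun 'I_N -> 'I_n}) : (0 < N)%N -> simplex (cnt s).
Proof.
move=> N0; rewrite /simplex; split.
  move=> i; apply: divr_ge0; last exact: ler0n.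
  by apply: sumr_ge0 => k _; exact: ler0n.
rewrite /cnt -mulr_suml exchange_big /=.
have H : forall k, \sum_(i < n) ((s k == i)%:R : R) = 1.
  move=> k; rewrite (bigD1 (s k)) //= eqxx big1 ?addr0 // => i.
  by rewrite eq_sym => /negbTE ->.
rewrite (eq_bigr _ (fun k _ => H k)) sumr_const card_ord divff //.
by rewrite pnatr_eq0 -lt0n.
Qed.

Lemma poly_bound (p : {mpoly R[n]}) :
  exists B, forall x, simplex x -> `|p.@[x]| <= B.
Proof.
exists (\sum_(m <- msupp p) `|p@_m|) => x [x0 x1].
have xi1 : forall i, x i <= 1.
  by move=> i; rewrite -x1 (bigD1 i) //= lerDl sumr_ge0.
rewrite mevalE; apply: le_trans (ler_norm_sum _ _ _) _.
apply: ler_sum => m _; rewrite normrM ler_piMr //.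
rewrite normr_prod; apply: prodr_ile1 => i _.
by rewrite normr_ge0 /= normrX exprn_ile1 // ger0_norm.
Qed.

Lemma psi_bound N p : (0 < N)%N -> `|psi N p| <= L 1 * simplex_norm p.
Proof.
move=> N0; have [B hB] := poly_bound p.
rewrite /psi -(sum_m N) mulr_suml; apply: le_trans (ler_norm_sum _ _ _) _.
apply: ler_sum => s _; rewrite normrM ger0_norm ?LXs_ge0 //.
rewrite ler_wpM2l ?LXs_ge0 //; apply: ub_le_sup.
  by exists B => y [x hx <-]; exact: hB.
by exists (cnt s) => //; exact: cnt_simplex.
Qed.


Lemma prodSX (I : finType) (P : pred I) : \prod_(i | P i) SX = SX ^+ #|P|.
Proof. exact: prodr_const. Qed.

Lemma A_inj N d (t : 'I_d -> 'I_n) (phi : {ffun 'I_d -> 'I_N}) : injective phi ->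
  \sum_(s : {ffun 'I_N -> 'I_n}) L (Xs s) * \prod_(j < d) ((s (phi j) == t j)%:R : R)
  = L (Xs t).
Proof.
move=> inj.
have -> : \sum_(s : {ffun 'I_N -> 'I_n}) L (Xs s) * \prod_(j < d) ((s (phi j) == t j)%:R : R)
   = \sum_(s : {ffun 'I_N -> 'I_n} | [forall j, s (phi j) == t j]) L (Xs s).
  rewrite [RHS]big_mkcond /=; apply: eq_bigr => s _.
  case: (boolP [forall j, s (phi j) == t j]) => [/forallP h | /forallPn [j hj]].
    by rewrite big1 ?mulr1 // => j _; rewrite h.
  by rewrite (bigD1 j) //= (negbTE hj) mul0r mulr0.
rewrite -L_sum.
pose Q := fun k : 'I_N => [pred i : 'I_n | [forall j, (phi j == k) ==> (i == t j)]].
have -> : \sum_(s : {ffun 'I_N -> 'I_n} | [forall j, s (phi j) == t j]) Xs s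
    = \prod_(k < N) \sum_(i | Q k i) 'X_i.
  rewrite bigA_distr_big_dep /Xs; apply: eq_bigl => s.
  apply/forallP/familyP => h.
    move=> k; rewrite inE; apply/forallP => j; apply/implyP => /eqP <-; exact: h j.
  move=> j; have := h (phi j); rewrite inE => /forallP /(_ j).
  by rewrite eqxx.
rewrite (bigID (fun k => k \in [set phi j | j : 'I_d])) /=.
rewrite big_imset /=; last by move=> x y _ _; exact: inj.
rewrite (eq_bigr (fun j => 'X_(t j))); last first.
  move=> j _; apply: (big_pred1 (t j)) => i /=.
  apply/forallP/eqP => [h | ->].
    by have := h j; rewrite eqxx /= => /eqP.
  by move=> j'; apply/implyP => /eqP /inj ->.
rewrite [X in _ * X](eq_bigr (fun _ => SX)); last first.
  move=> k hk; rewrite /SX; apply: eq_bigl => i /=; apply/forallP => j; apply/implyP => /eqP hj.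
  by move: hk; rewrite -hj imset_f.
by rewrite prodSX LSk.
Qed.


Definition Aphi N d (t : 'I_d -> 'I_n) (phi : {ffun 'I_d -> 'I_N}) : R :=
  \sum_(s : {ffun 'I_N -> 'I_n}) L (Xs s) * \prod_(j < d) ((s (phi j) == t j)%:R : R).

Lemma Aphi_bound (N d : nat) (t : 'I_d -> 'I_n) (phi : {ffun 'I_d -> 'I_N}) : 0 <= Aphi t phi <= L 1.
Proof.
have hP : forall s : {ffun 'I_N -> 'I_n},
    0 <= \prod_(j < d) ((s (phi j) == t j)%:R : R) <= 1.
  move=> s; apply/andP; split; first by apply: prodr_ge0 => j _; rewrite ler0n.
  by apply: prodr_ile1 => j _; rewrite ler0n /=; case: (_ == _).
apply/andP; split.
  by apply: sumr_ge0 => s _; rewrite mulr_ge0 ?LXs_ge0 //; case/andP: (hP s).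
rewrite -(sum_m N); apply: ler_sum => s _.
by rewrite ler_piMr ?LXs_ge0 //; case/andP: (hP s).
Qed.

Lemma psi_Xs N d (t : 'I_d -> 'I_n) :
  psi N (Xs t) = (\sum_(phi : {ffun 'I_d -> 'I_N}) Aphi t phi) / (N ^ d)%:R.
Proof.
rewrite /psi /Aphi exchange_big mulr_suml /=; apply: eq_bigr => s _.
rewrite -mulr_sumr -mulrA; congr (_ * _).
rewrite /Xs rmorph_prod /=.
under eq_bigr do rewrite mevalXU.
rewrite /cnt big_split /= prodr_const card_ord bigA_distr_bigA.
by rewrite natrX exprVn.
Qed.


Lemma L1_ge0 : 0 <= L 1.
Proof. by rewrite -(@mpolyX0 n R). Qed.



Lemma mono_est N d (t : 'I_d -> 'I_n) : L 1 <= 1 -> (0 < N)%N -> (d <= N)%N ->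
  `|L (Xs t) - psi N (Xs t)| <= 1 - (N ^_ d)%:R / (N ^ d)%:R.
Proof.
move=> L11 N0 dN.
pose phi0 : {ffun 'I_d -> 'I_N} := [ffun j => widen_ord dN j].
have inj0 : injective phi0.
  by move=> x y; rewrite !ffunE => /(congr1 val) /= /val_inj.
have aE := A_inj t inj0.
have /andP [a0 a1] : 0 <= L (Xs t) <= L 1 by rewrite -aE; exact: Aphi_bound.
have DN : (N ^ d)%:R != 0 :> R by rewrite pnatr_eq0 expn_eq0 negb_and -lt0n N0.
have -> : L (Xs t) = (\sum_(phi : {ffun 'I_d -> 'I_N}) L (Xs t)) / (N ^ d)%:R.
  by rewrite sumr_const card_ffun !card_ord -[L (Xs t) *+ _]mulr_natr mulfK.
rewrite psi_Xs -mulrBl -sumrB (bigID [pred phi : {ffun 'I_d -> 'I_N} | injectiveb phi]) /=.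
rewrite big1 ?add0r; last first.
  by move=> phi /injectiveP hi; rewrite /Aphi (A_inj t hi) subrr.
set A := [set phi : {ffun 'I_d -> 'I_N} | injectiveb phi].
have cA : #|A| = (N ^_ d)%N by rewrite card_inj_ffuns !card_ord.
have cAC : #|~: A| = (N ^ d - N ^_ d)%N.
  by have := cardsC A; rewrite cA card_ffun !card_ord => <-; rewrite addKn.
have : `|\sum_(phi : {ffun 'I_d -> 'I_N} | ~~ injectiveb phi) (L (Xs t) - Aphi t phi)| <= (N ^ d - N ^_ d)%:R.
  apply: le_trans (ler_norm_sum _ _ _) _.
  apply: le_trans (_ : \sum_(phi in ~: A) (1 : R) <= _); last first.
    by rewrite sumr_const cAC.
  rewrite [X in X <= _](eq_bigl (fun phi => phi \in ~: A)); last first.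
    by move=> phi; rewrite !inE.
  apply: ler_sum => phi _.
  have /andP [b0 b1] := Aphi_bound t phi.
  rewrite ler_norml; apply/andP; split; lra.
move=> H.
rewrite normrM normfV normr_nat.
have -> : 1 - (N ^_ d)%:R / (N ^ d)%:R = ((N ^ d)%:R - (N ^_ d)%:R) / (N ^ d)%:R :> R.
  by rewrite mulrBl divff.
by rewrite ler_wpM2r ?invr_ge0 ?ler0n // -natrB ?ffact_le_exp.
Qed.



Lemma Xs_mul d1 d2 (t1 : 'I_d1 -> 'I_n) (t2 : 'I_d2 -> 'I_n) :
  Xs t1 * Xs t2 = Xs (fun j : 'I_(d1 + d2) =>
     match split j with inl a => t1 a | inr b => t2 b end).
Proof.
rewrite /Xs big_split_ord; congr (_ * _); apply: eq_bigr => j _.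
  by rewrite (unsplitK (inl j)).
by rewrite (unsplitK (inr j)).
Qed.

Lemma Xs_rep (i0 : 'I_n) (m : 'X_{1..n}) : exists d (t : 'I_d -> 'I_n), 'X_[m] = Xs t.
Proof.
pose P := fun q : {mpoly R[n]} => exists d (t : 'I_d -> 'I_n), q = Xs t.
have P1 : P 1 by exists 0%N, (fun _ => i0); rewrite /Xs big_ord0.
have PM : forall q1 q2, P q1 -> P q2 -> P (q1 * q2).
  move=> q1 q2 [d1 [t1 ->]] [d2 [t2 ->]]; rewrite Xs_mul; by do 2 eexists.
rewrite mpolyXE_id; apply: (big_ind P) => // i _.
elim: (m i) => [|k IH]; first by rewrite expr0.
rewrite exprS; apply: PM => //.
by exists 1%N, (fun _ => i); rewrite /Xs big_ord1.
Qed.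

Lemma psi_lin N c (q p : {mpoly R[n]}) : psi N (c *: q + p) = c * psi N q + psi N p.
Proof.
rewrite /psi mulr_sumr -big_split; apply: eq_bigr => s _ /=.
by rewrite mevalD mevalZ; ring.
Qed.

Lemma approx (i0 : 'I_n) (L1 : L 1 <= 1) (p : {mpoly R[n]}) :
  exists C D, 0 <= C /\ forall N, (0 < N)%N -> (D <= N)%N ->
     `|L p - psi N p| <= C / N%:R.
Proof.
elim/mpolyind: p => [|c m p _ _ [C [D [C0 HC]]]].
  exists 0, 0%N; split => // N _ _.
  rewrite L0 /psi big1 ?subrr ?normr0 ?mul0r // => s _.
  by rewrite meval0 mulr0.
have [d [t ->]] := Xs_rep i0 m.
exists (`|c| * (d * d)%:R + C), (maxn d D); split.
  by rewrite addr_ge0 // mulr_ge0.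
move=> N N0; rewrite geq_max => /andP [dN DN].
rewrite psi_lin LD LZ.
have -> : c * L (Xs t) + L p - (c * psi N (Xs t) + psi N p)
    = c * (L (Xs t) - psi N (Xs t)) + (L p - psi N p) by ring.
apply: le_trans (ler_normD _ _) _.
rewrite mulrDl normrM -mulrA; apply: lerD; last exact: HC.
apply: ler_wpM2l => //.
apply: le_trans (mono_est t L1 N0 dN) _.
exact: ffact_ratio.
Qed.

End Aux.


Theorem lemma4 (R : realType) (n : nat) (L : {mpoly R[n]} -> R)
  (L_lin : forall (a : R) (p q : {mpoly R[n]}), L (a *: p + q) = a * L p + L q)
  (L_I : forall p : {mpoly R[n]}, L (p * @simplex_gen R n) = 0)
  (L_mon : forall m : 'X_{1..n}, 0 <= L 'X_[m])
  (L_one : L 1 <= 1) :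
  forall (f : {mpoly R[n]}) (eps : R), 0 < eps ->
    exists2 delta : R, 0 < delta &
      forall g : {mpoly R[n]}, simplex_norm (g - f) < delta -> `|L g - L f| < eps.
Proof.
move=> f eps eps0; exists eps => // g hg.
rewrite -(LB L_lin).
have [n0|npos] := posnP n.
  subst n; move: L_I; rewrite /simplex_gen big_ord0 subr0 => LI.
  by rewrite -[g - f]mulr1 LI normr0.
apply: le_lt_trans hg.
set h := g - f.
pose i0 := Ordinal npos.
have [C [D [C0 HC]]] := approx L_lin L_I L_mon i0 L_one h.
pose x0 : 'I_n -> R := fun i => (i == i0)%:R.
have x0S : simplex x0.
  rewrite /simplex; split; first by move=> i; rewrite /x0 ler0n.
  rewrite (bigD1 i0) //= /x0 eqxx big1 ?addr0 // => i /negbTE -> //.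
have [B hB] := poly_bound h.
have hasub : has_ubound [set `|h.@[x]| | x in @simplex R n].
  by exists B => y [x hx <-]; exact: hB.
have s0 : 0 <= simplex_norm h.
  apply: le_trans (normr_ge0 h.@[x0]) _; apply: ub_le_sup => //.
  by exists x0.
have L10 : 0 <= L 1 by rewrite -(@mpolyX0 n R).
rewrite leNgt; apply/negP => hlt.
set e := `|L h| - simplex_norm h.
have e0 : 0 < e by rewrite subr_gt0.
have Ce0 : 0 <= C / e by rewrite divr_ge0 // ltW.
pose N := maxn (maxn D 1) (Num.bound (C / e)).
have N0 : (0 < N)%N by rewrite leq_max leq_max orbT.
have DN : (D <= N)%N by rewrite leq_max leq_max leqnn.
have CN : C / e < N%:R.
  apply: lt_le_trans (archi_boundP Ce0) _.
  by rewrite ler_nat leq_max leqnn orbT.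
have Npos : 0 < N%:R :> R by rewrite ltr0n.
have CNe : C / N%:R < e.
  by rewrite ltr_pdivrMr // mulrC -ltr_pdivrMr.
have h1 := HC N N0 DN.
have h2 := psi_bound L_lin L_I L_mon h N0.
have h3 := ler_normD (psi L N h) (L h - psi L N h).
rewrite addrC subrK in h3.
have h4 : L 1 * simplex_norm h <= simplex_norm h.
  by rewrite ler_piMl.
rewrite /e in CNe; lra.
Qed.
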